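(* Let $b,c\in\mathbb{N}$ and $n,m\ge 1$. Consider the generalized OK Corral Pólya–Eggenberger urn with ball transition matrix $\begin{pmatrix}0&-b\\-c&0\end{pmatrix}$ started with $c n$ white and $b m$ black balls, and let $Y_{cn,bm}$ be the number of white balls remaining when the process stops. Then for $1\le k\le n$, \[ \mathbb{P}\{Y_{cn,bm}=ck\}=\frac{k}{(n-k+1)!\,(m-1)!}\frac{b^{n-k}}{c^{n-k}}\sum_{l=1}^{m}(-1)^{m-l}\frac{\binom{m-1}{l-1}}{\binom{n+\frac{b}{c}l}{n-k+1}}\,l^{n+m-1-k} =\frac{k}{(n-k)!\,m!}\frac{c^{m}}{b^{m}}\sum_{l=0}^{n}(-1)^{n-l}\frac{\binom{n-k}{l-k}}{\binom{m+\frac{cl}{b}}{m}}\,l^{m+n-1-k}, \] and \[ \mathbb{P}\{Y_{cn,bm}=0\}=\frac{1}{n!\,(m-1)!}\frac{b^{n}}{c^{n}}\sum_{l=1}^{m}(-1)^{m-l}\frac{\binom{m-1}{l-1}}{\binom{n+\frac{b}{c}l}{n}}\,l^{n+m-1}. \]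
   Context: The urn: at each step one ball is drawn uniformly at random among all balls present and returned; if it is white, $b$ black balls are removed; if it is black, $c$ white balls are removed (so from $cn'$ white and $bm'$ black balls, the number of white balls decreases by $c$ with probability $bm'/(cn'+bm')$ and the number of black balls decreases by $b$ with probability $cn'/(cn'+bm')$). The process stops as soon as the urn contains no white or no black balls; $Y_{cn,bm}$ is the number of white balls at that time ($0$ if whites are exhausted first). For real $x$ and integer $k\ge0$, $\binom{x}{k}=x(x-1)\cdots(x-k+1)/k!$, and $\binom{x}{k}=0$ for negative integers $k$. *)

(* Defs.v *)
From mathcomp Require Import all_boot all_order all_algebra.
Set Implicit Arguments. Unset Strict Implicit. Unset Printing Implicit Defensive.
Import Order.TTheory GRing.Theory Num.Theory.
Local Open Scope ring_scope.

Definition binomR (R : fieldType) (x : R) (k : nat) : R :=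
  (\prod_(i < k) (x - i%:R)) / (k`!)%:R.

(* okc_law b c n m k = P{ final number of white balls = c*k } for the OK Corral
   urn started with c*n white and b*m black balls.  From state (c n', b m')
   with n', m' >= 1: whites lose c with prob b m'/(c n' + b m'), blacks lose b
   with prob c n'/(c n' + b m').  Stopping when n' = 0 (Y = 0, i.e. k = 0) or
   m' = 0 (Y = c n', i.e. k = n'). *)
Fixpoint okc_law (R : fieldType) (b c : nat) (n : nat) : nat -> nat -> R :=
  match n with
  | 0 => fun _ k => (k == 0)%:R
  | n'.+1 => fun m k =>
      let fix g (m : nat) : R :=
        match m with
        | 0 => (k == n'.+1)%:R
        | m'.+1 =>
            let tot : R := (c * n'.+1 + b * m'.+1)%:R in
            (b * m'.+1)%:R / tot * @okc_law R b c n' m'.+1 k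
            + (c * n'.+1)%:R / tot * g m'
        end
      in g m
  end.

(* Main.v *)
Require Import Defs.
From mathcomp Require Import all_boot all_order all_algebra.
From mathcomp Require Import ring lra zify.
Import Order.TTheory GRing.Theory Num.Theory.
Local Open Scope ring_scope.

Set Implicit Arguments. Unset Strict Implicit. Unset Printing Implicit Defensive.

Section S.
Variable R : realFieldType.

Lemma FD (a : nat) j : forall N, (j <= N)%N ->
  \sum_(i < N.+1) (-1 : R)^+(N - i) * 'C(N, i)%:R * ((i + a)%:R)^+j
  = (j == N)%:R * (N`!)%:R.
Proof.
elim: j => [|j IH] N hjN.
  have := exprDn (-1 : R) 1 N.
  rewrite addNr expr0n => E.
  rewrite (eq_bigr (fun i : 'I_N.+1 => (-1 : R)^+(N-i) * 'C(N,i)%:R)); last first.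
    move=> i _. exact: mulr1.
  rewrite eq_sym; case: N {hjN} E => [|N] E.
    by rewrite big_ord1 subnn expr0 bin0 fact0 !mul1r.
  rewrite /= mul0r; transitivity ((N.+1 == 0)%:R : R); last by []. rewrite E; apply: eq_bigr => i _.
  by rewrite expr1n mulr1 mulr_natr.
case: N hjN => [//|N] hjN.
have e1 : forall i : 'I_N.+2, (-1 : R)^+(N.+1 - i) * 'C(N.+1, i)%:R * ((i + a)%:R)^+j.+1
   = (N.+1 + a)%:R * ((-1 : R)^+(N.+1 - i) * 'C(N.+1, i)%:R * ((i + a)%:R)^+j)
     - N.+1%:R * ((-1 : R)^+(N.+1 - i) * 'C(N, i)%:R * ((i + a)%:R)^+j).
  move=> i.
  have hi : (i <= N.+1)%N by rewrite -ltnS.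
  have : (N.+1 * 'C(N.+1.-1, i) = (N.+1 - i) * 'C(N.+1, i))%N by apply: mul_bin_down.
  move=> /(congr1 (fun x : nat => x%:R : R)); rewrite /= !natrM natrB // => hC.
  rewrite exprS !natrD.
  have -> : N.+1%:R * ((-1 : R)^+(N.+1 - i) * 'C(N, i)%:R * (i%:R + a%:R)^+j)
     = (-1 : R)^+(N.+1 - i) * ((N.+1%:R * 'C(N, i)%:R)) * (i%:R + a%:R)^+j by ring.
  rewrite hC; ring.
rewrite (eq_bigr _ (fun i _ => e1 i)) sumrB -mulr_sumr -mulr_sumr IH; last exact: leqW hjN.
rewrite big_ord_recr /= bin_small // mulr0 mul0r addr0.
have -> : \sum_(i < N.+1) (-1 : R) ^+ (N.+1 - i) * 'C(N, i)%:R * (i + a)%:R ^+ j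
   = - \sum_(i < N.+1) (-1 : R) ^+ (N - i) * 'C(N, i)%:R * (i + a)%:R ^+ j.
  rewrite -sumrN; apply: eq_bigr => i _.
  by rewrite subSn; [rewrite exprS mulN1r !mulNr | rewrite -ltnS].
rewrite IH // eqSS.
have -> : (j == N.+1) = false by apply/negbTE; lia.
rewrite mul0r mulr0 sub0r factS natrM; ring.
Qed.

Definition Acoef (a N i : nat) : R :=
  (-1 : R)^+(N - i) * 'C(N, i)%:R * ((i + a)%:R)^+N / (N`!)%:R.

Lemma fact_neq0 n : ((n`!)%:R : R) != 0.
Proof. by rewrite pnatr_eq0 -lt0n fact_gt0. Qed.

Lemma natS_neq0 n : ((n.+1)%:R : R) != 0.
Proof. by rewrite pnatr_eq0. Qed.

Lemma A_rec a N i : (i <= N)%N ->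
  Acoef a N.+1 i * (N.+1%:R - i%:R) = - (i + a)%:R * Acoef a N i.
Proof.
move=> hi.
have : (N.+1 * 'C(N.+1.-1, i) = (N.+1 - i) * 'C(N.+1, i))%N by apply: mul_bin_down.
move=> /(congr1 (fun x : nat => x%:R : R)); rewrite /= !natrM natrB ?(leqW hi) // => hC.
rewrite /Acoef subSn // exprS factS natrM exprS.
have h1 := fact_neq0 N; have h2 := natS_neq0 N.
have -> : (-1 : R) * (-1) ^+ (N - i) * 'C(N.+1, i)%:R * ((i + a)%:R * (i + a)%:R ^+ N) /
   (N.+1%:R * N`!%:R) * (N.+1%:R - i%:R)
  = - ((-1) ^+ (N - i) * ((N.+1%:R - i%:R) * 'C(N.+1, i)%:R) * ((i + a)%:R * (i + a)%:R ^+ N) /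
   (N.+1%:R * N`!%:R)) by ring.
rewrite -hC; field; by rewrite h1 addrC natr1 h2.
Qed.

Lemma A_sum1 a N : \sum_(i < N.+1) Acoef a N i = 1.
Proof.
rewrite /Acoef -mulr_suml FD // eqxx mul1r divff //; exact: fact_neq0.
Qed.

Lemma A_suminv a N : (0 < a)%N ->
  \sum_(i < N.+2) Acoef a N.+1 i / (i + a)%:R = 0.
Proof.
move=> ha.
rewrite (eq_bigr (fun i : 'I_N.+2 => (-1 : R)^+(N.+1 - i) * 'C(N.+1, i)%:R * ((i + a)%:R)^+N / ((N.+1)`!)%:R)).
  rewrite -mulr_suml FD ?leqnSn //.
  have -> : (N == N.+1) = false by apply/negbTE; lia.
  by rewrite !mul0r.
move=> i _; rewrite /Acoef exprS.
have h : ((i + a)%:R : R) != 0 by rewrite pnatr_eq0; lia.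
have h1 := fact_neq0 N.+1.
field; by rewrite h1 -natrD h.
Qed.

Lemma gen (A : nat -> nat -> R) (B0 B1 : nat -> R) (a : nat) (t q : R) N :
 (forall i, (i <= N)%N -> A N.+1 i * (N.+1%:R - i%:R) = - (i + a)%:R * A N i) ->
 (forall i, B1 i * (q + t * (i + a)%:R) = t * (i + a)%:R * B0 i) ->
 (q + t * (N.+1 + a)%:R) * \sum_(i < N.+2) A N.+1 i * B1 i =
 t * (N.+1 + a)%:R * \sum_(i < N.+2) A N.+1 i * B0 i + q * \sum_(i < N.+1) A N i * B1 i.
Proof.
move=> hA hB.
rewrite [X in _ * X = _]big_ord_recr [X in _ = _ * X + _]big_ord_recr /= !mulrDr.
have -> : (q + t * (N.+1 + a)%:R) * (A N.+1 N.+1 * B1 N.+1)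
  = t * (N.+1 + a)%:R * (A N.+1 N.+1 * B0 N.+1).
  transitivity (A N.+1 N.+1 * (B1 N.+1 * (q + t * (N.+1 + a)%:R))); first by ring.
  by rewrite hB; ring.
rewrite -addrA [X in _ = _ + X]addrC addrA; congr (_ + _); rewrite !mulr_sumr -big_split /=.
apply: eq_bigr => i _.
have hA' := hA i (leq_ord i); have hB' := hB i.
apply/eqP; rewrite -subr_eq0; apply/eqP.
rewrite !natrD in hA' hB' *.
have -> : (q + t * (N.+1%:R + a%:R)) * (A N.+1 i * B1 i) -
  (t * (N.+1%:R + a%:R) * (A N.+1 i * B0 i) + q * (A N i * B1 i))
  = t * B1 i * (A N.+1 i * (N.+1%:R - i%:R) - (- (i%:R + a%:R) * A N i))
    + A N.+1 i * (B1 i * (q + t * (i%:R + a%:R)) - t * (i%:R + a%:R) * B0 i)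
    - t * B0 i * (A N.+1 i * (N.+1%:R - i%:R) - (- (i%:R + a%:R) * A N i))
    - A N i * (B1 i * (q + t * (i%:R + a%:R)) - t * (i%:R + a%:R) * B0 i) by ring.
by rewrite hA' hB'; ring.
Qed.
End S.

Section P.
Variable R : realFieldType.
Variables b c : nat.
Hypothesis hb : (0 < b)%N.
Hypothesis hc : (0 < c)%N.

Local Notation P := (okc_law R b c).

Lemma Prec n m k : P n.+1 m.+1 k =
  (b * m.+1)%:R / (c * n.+1 + b * m.+1)%:R * P n m.+1 k
  + (c * n.+1)%:R / (c * n.+1 + b * m.+1)%:R * P n.+1 m k.
Proof. by []. Qed.

Lemma tot_neq0 n m : ((c * n.+1 + b * m.+1)%:R : R) != 0.
Proof. rewrite pnatr_eq0; lia. Qed.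

Lemma Prec1 n m k :
  (n.+1%:R + b%:R / c%:R * m.+1%:R) * P n.+1 m.+1 k =
  b%:R / c%:R * m.+1%:R * P n m.+1 k + n.+1%:R * P n.+1 m k.
Proof.
rewrite Prec.
have h1 := tot_neq0 n m.
have h2 : (c%:R : R) != 0 by rewrite pnatr_eq0; lia.
move: h1; rewrite !natrD !natrM => h1.
field; by rewrite h2 !(addrC 1) !natr1.
Qed.

Lemma Prec2 n m k :
  (c%:R / b%:R * n.+1%:R + m.+1%:R) * P n.+1 m.+1 k =
  m.+1%:R * P n m.+1 k + c%:R / b%:R * n.+1%:R * P n.+1 m k.
Proof.
rewrite Prec.
have h1 := tot_neq0 n m.
have h2 : (b%:R : R) != 0 by rewrite pnatr_eq0; lia.
move: h1; rewrite !natrD !natrM => h1.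
field; by rewrite h2 !(addrC 1) !natr1.
Qed.

Lemma Pzero k : forall n m, (n < k)%N -> P n m k = 0.
Proof.
elim=> [|n IH] m hn; first by rewrite /= (_ : (k == 0%N) = false) //; lia.
elim: m => [|m IHm]; first by rewrite /= (_ : (k == n.+1) = false) //; lia.
by rewrite Prec IHm IH ?(ltnW hn) // !mulr0 addr0.
Qed.

Definition ff (x : R) d := \prod_(j < d) (x - j%:R).

Lemma ffS x d : ff x d.+1 = x * ff (x - 1) d.
Proof.
rewrite /ff big_ord_recl subr0; congr (_ * _); apply: eq_bigr => j _.
by rewrite lift0 -natr1; ring.
Qed.

Lemma ffpos n (y : R) d : 0 < y -> (d <= n.+1)%N -> 0 < ff (n%:R + y) d.
Proof.
move=> hy hd; rewrite /ff; apply: prodr_gt0 => j _.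
have : (j%:R : R) <= n%:R by rewrite ler_nat; have := ltn_ord j; lia.
move=> hj; rewrite subr_gt0; lra.
Qed.

Local Notation r := (b%:R / c%:R : R).
Local Notation s := (c%:R / b%:R : R).

Lemma r_gt0 : 0 < r.
Proof. by apply: divr_gt0; rewrite ltr0n. Qed.
Lemma s_gt0 : 0 < s.
Proof. by apply: divr_gt0; rewrite ltr0n. Qed.

Lemma ry_gt0 i : 0 < r * (i + 1)%:R.
Proof. by apply: mulr_gt0; [exact: r_gt0 | rewrite ltr0n addn1]. Qed.

Definition U1 k n i := k%:R * (r * (i + 1)%:R)^+(n - k) / ff (n%:R + r * (i + 1)%:R) (n - k).+1.

Lemma U1_rec k n i : (k <= n)%N ->
  U1 k n.+1 i * (n.+1%:R + r * (i + 1)%:R) = r * (i + 1)%:R * U1 k n i.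
Proof.
move=> hk; rewrite /U1 subSn // ffS exprS.
have -> : n.+1%:R + r * (i + 1)%:R - 1 = n%:R + r * (i + 1)%:R by rewrite -natr1; ring.
have hy := ry_gt0 i.
have h1 : ff (n%:R + r * (i + 1)%:R) (n - k).+1 != 0.
  by rewrite gt_eqF // ffpos //; lia.
have h2 : n.+1%:R + r * (i + 1)%:R != 0.
  by rewrite gt_eqF //; have : (0 : R) <= n.+1%:R by []; lra.
move: h1 h2 hy; set y := r * (i + 1)%:R; set F := ff _ _ => h1 h2 hy.
field; by rewrite h1 (addrC 1) natr1 h2.
Qed.

Lemma U1_base k i : (0 < k)%N ->
  U1 k k i * (k%:R + r * (i + 1)%:R) = r * (i + 1)%:R * (k%:R / (r * (i + 1)%:R)).
Proof.
move=> hk; rewrite /U1 subnn /ff big_ord1 subr0 expr0 mulr1.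
have hy := ry_gt0 i.
have h2 : k%:R + r * (i + 1)%:R != 0.
  by rewrite gt_eqF //; have : (0 : R) <= k%:R by []; lra.
move: h2 hy; set y := r * (i + 1)%:R => h2 hy.
field; by rewrite h2 gt_eqF.
Qed.

Lemma bR_neq0 : (b%:R : R) != 0. Proof. by rewrite pnatr_eq0 -lt0n. Qed.
Lemma cR_neq0 : (c%:R : R) != 0. Proof. by rewrite pnatr_eq0 -lt0n. Qed.

Lemma A00 a : Acoef R a 0 0 = 1.
Proof. by rewrite /Acoef subnn !expr0 bin0 fact0 !mul1r invr1. Qed.

Lemma F1_main k : (0 < k)%N -> forall d M,
  P (k + d) M.+1 k = \sum_(i < M.+1) Acoef R 1 M i * U1 k (k + d) i.
Proof.
case: k => [//|k] _.
have hr := r_gt0.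
elim=> [|d IHd].
  rewrite addn0; elim=> [|M IHM].
    have E := Prec1 k 0 k.+1.
    have e0 : P k.+1 0 k.+1 = 1 by rewrite /= eqxx.
    rewrite (Pzero 1 (ltnSn k)) e0 in E.
    rewrite big_ord1 A00 mul1r.
    have hx : k.+1%:R + r * 1%:R != 0.
      by rewrite gt_eqF //; have : (0 : R) <= k.+1%:R by []; lra.
    apply: (mulfI hx); rewrite E [RHS]mulrC (_ : U1 k.+1 k.+1 ord0 = U1 k.+1 k.+1 0) //.
    have := U1_base 0 (ltn0Sn k); rewrite add0n => ->.
    by field; rewrite bR_neq0 cR_neq0.
  have E := Prec1 k M.+1 k.+1.
  rewrite (Pzero M.+2 (ltnSn k)) IHM mulr0 add0r in E.
  have hx : k.+1%:R + r * M.+2%:R != 0.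
    by rewrite gt_eqF //; have : (0 : R) <= k.+1%:R by []; have : (0 : R) < M.+2%:R by []; nra.
  apply: (mulfI hx); rewrite E.
  have G := gen (A := Acoef R 1) (B0 := fun i => k.+1%:R / (r * (i + 1)%:R)) (B1 := U1 k.+1 k.+1)
     (a := 1) (t := r) (q := k.+1%:R) (@A_rec R 1 M) (fun i => U1_base i (ltn0Sn k)).
  rewrite addn1 in G; rewrite G.
  have -> : \sum_(i < M.+2) Acoef R 1 M.+1 i * (k.+1%:R / (r * (i + 1)%:R))
     = k.+1%:R / r * \sum_(i < M.+2) Acoef R 1 M.+1 i / (i + 1)%:R.
    rewrite mulr_sumr; apply: eq_bigr => i _.
    have hi : ((i + 1)%:R : R) != 0 by rewrite pnatr_eq0 addn1.
    by field; rewrite natr1 bR_neq0 cR_neq0 pnatr_eq0.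
  by rewrite A_suminv // !mulr0 add0r.
rewrite addnS; have hkn : (k.+1 <= k.+1 + d)%N by apply: leq_addr.
move: IHd; set n := k.+1 + d => IHd.
elim=> [|M IHM].
  have E := Prec1 n 0 k.+1.
  have e0 : P n.+1 0 k.+1 = 0.
    by rewrite /= (_ : (k.+1 == n.+1) = false) //; apply/negbTE; rewrite /n; lia.
  rewrite e0 mulr0 addr0 IHd big_ord1 A00 mul1r in E.
  rewrite big_ord1 A00 mul1r.
  have hx : n.+1%:R + r * 1%:R != 0.
    by rewrite gt_eqF //; have : (0 : R) <= n.+1%:R by []; lra.
  apply: (mulfI hx); rewrite E [RHS]mulrC (_ : U1 k.+1 n.+1 ord0 = U1 k.+1 n.+1 0) //.
  have := U1_rec 0 hkn; rewrite add0n => ->.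
  by rewrite (_ : U1 k.+1 n ord0 = U1 k.+1 n 0) //; ring.
have E := Prec1 n M.+1 k.+1.
rewrite IHd IHM in E.
have hx : n.+1%:R + r * M.+2%:R != 0.
  by rewrite gt_eqF //; have : (0 : R) <= n.+1%:R by []; have : (0 : R) < M.+2%:R by []; nra.
apply: (mulfI hx); rewrite E.
have G := gen (A := Acoef R 1) (B0 := U1 k.+1 n) (B1 := U1 k.+1 n.+1)
   (a := 1) (t := r) (q := n.+1%:R) (@A_rec R 1 M) (fun i => U1_rec i hkn).
by rewrite addn1 in G; rewrite G.
Qed.

Definition U0 n i := (r * (i + 1)%:R)^+n / ff (n%:R + r * (i + 1)%:R) n.

Lemma U0_rec n i :
  U0 n.+1 i * (n.+1%:R + r * (i + 1)%:R) = r * (i + 1)%:R * U0 n i.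
Proof.
rewrite /U0 ffS exprS.
have -> : n.+1%:R + r * (i + 1)%:R - 1 = n%:R + r * (i + 1)%:R by rewrite -natr1; ring.
have hy := ry_gt0 i.
have h1 : ff (n%:R + r * (i + 1)%:R) n != 0 by rewrite gt_eqF // ffpos.
have h2 : n.+1%:R + r * (i + 1)%:R != 0.
  by rewrite gt_eqF //; have : (0 : R) <= n.+1%:R by []; lra.
move: h1 h2 hy; set y := r * (i + 1)%:R; set F := ff _ _ => h1 h2 hy.
field; by rewrite h1 (addrC 1) natr1 h2.
Qed.

Lemma F0_main : forall n M,
  P n M.+1 0 = \sum_(i < M.+1) Acoef R 1 M i * U0 n i.
Proof.
have hr := r_gt0.
elim=> [|n IHn] M.
  rewrite (eq_bigr (fun i : 'I_M.+1 => Acoef R 1 M i)) ?A_sum1 //.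
  by move=> i _; rewrite /U0 /ff big_ord0 expr0 divr1 mulr1.
elim: M => [|M IHM].
  have E := Prec1 n 0 0.
  have e0 : P n.+1 0 0 = 0 by [].
  rewrite e0 mulr0 addr0 IHn big_ord1 A00 mul1r in E.
  rewrite big_ord1 A00 mul1r.
  have hx : n.+1%:R + r * 1%:R != 0.
    by rewrite gt_eqF //; have : (0 : R) <= n.+1%:R by []; lra.
  apply: (mulfI hx); rewrite E [RHS]mulrC (_ : U0 n.+1 ord0 = U0 n.+1 0) //.
  have := U0_rec n 0; rewrite add0n => ->.
  by rewrite (_ : U0 n ord0 = U0 n 0) //; ring.
have E := Prec1 n M.+1 0.
rewrite IHn IHM in E.
have hx : n.+1%:R + r * M.+2%:R != 0.
  by rewrite gt_eqF //; have : (0 : R) <= n.+1%:R by []; have : (0 : R) < M.+2%:R by []; nra.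
apply: (mulfI hx); rewrite E.
have G := gen (A := Acoef R 1) (B0 := U0 n) (B1 := U0 n.+1)
   (a := 1) (t := r) (q := n.+1%:R) (@A_rec R 1 M) (U0_rec n).
by rewrite addn1 in G; rewrite G.
Qed.

Definition Y k m i := k%:R * (s * (i + k)%:R)^+m / ((i + k)%:R * ff (m%:R + s * (i + k)%:R) m).

Lemma sy_gt0 k i : (0 < k)%N -> 0 < s * (i + k)%:R.
Proof. by move=> hk; apply: mulr_gt0; [exact: s_gt0 | rewrite ltr0n; lia]. Qed.

Lemma Y_rec k m i : (0 < k)%N ->
  Y k m.+1 i * (m.+1%:R + s * (i + k)%:R) = s * (i + k)%:R * Y k m i.
Proof.
move=> hk; rewrite /Y ffS exprS.
have -> : m.+1%:R + s * (i + k)%:R - 1 = m%:R + s * (i + k)%:R by rewrite -natr1; ring.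
have hy := sy_gt0 i hk.
have h1 : ff (m%:R + s * (i + k)%:R) m != 0 by rewrite gt_eqF // ffpos.
have h2 : m.+1%:R + s * (i + k)%:R != 0.
  by rewrite gt_eqF //; have : (0 : R) <= m.+1%:R by []; lra.
have h3 : ((i + k)%:R : R) != 0 by rewrite pnatr_eq0; lia.
move: h1 h2 hy h3; set y := s * (i + k)%:R; set F := ff _ _ => h1 h2 hy h3.
field; by rewrite h1 -natrD h3 (addrC 1) natr1 h2.
Qed.

Lemma F2_main k : (0 < k)%N -> forall N p,
  P (k + N) p k = \sum_(i < N.+1) Acoef R k N i * Y k p i.
Proof.
case: k => [//|k] _.
have hs := s_gt0.
have hK : (0 < k.+1)%N by [].
elim=> [|N IHN].
  rewrite addn0; elim=> [|p IHp].
    have -> : P k.+1 0 k.+1 = 1 by rewrite /= eqxx.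
    rewrite big_ord1 A00 mul1r /Y /ff big_ord0 expr0 (_ : (ord0 + k.+1 = k.+1)%N) //.
    by field; rewrite (addrC 1) natr1 pnatr_eq0.
  have E := Prec2 k p k.+1.
  rewrite (Pzero p.+1 (ltnSn k)) mulr0 add0r IHp big_ord1 A00 mul1r in E.
  rewrite big_ord1 A00 mul1r.
  have hx : s * k.+1%:R + p.+1%:R != 0.
    by rewrite gt_eqF //; have : (0 : R) < k.+1%:R by []; have : (0 : R) <= p.+1%:R by []; nra.
  apply: (mulfI hx); rewrite E [RHS]mulrC (_ : Y k.+1 p.+1 ord0 = Y k.+1 p.+1 0) //.
  rewrite addrC; have := Y_rec p 0 hK; rewrite add0n => ->.
  by rewrite (_ : Y k.+1 p ord0 = Y k.+1 p 0) //; ring.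
rewrite addnS; have e : (N.+1 + k.+1 = (k.+1 + N).+1)%N by lia.
move: IHN e; set n := k.+1 + N => IHN e.
elim=> [|p IHp].
  have e0 : P n.+1 0 k.+1 = 0.
    by rewrite /= (_ : (k.+1 == n.+1) = false) //; apply/negbTE; rewrite /n; lia.
  rewrite e0.
  rewrite (eq_bigr (fun i : 'I_N.+2 => k.+1%:R * (Acoef R k.+1 N.+1 i / (i + k.+1)%:R))).
    by rewrite -mulr_sumr A_suminv // mulr0.
  move=> i _; rewrite /Y /ff big_ord0 expr0 mulr1 mulr1; ring.
have E := Prec2 n p k.+1.
rewrite IHN IHp in E.
have hx : s * n.+1%:R + p.+1%:R != 0.
  by rewrite gt_eqF //; have : (0 : R) < n.+1%:R by []; have : (0 : R) <= p.+1%:R by []; nra.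
apply: (mulfI hx); rewrite E.
have G := gen (A := Acoef R k.+1) (B0 := Y k.+1 p) (B1 := Y k.+1 p.+1)
   (a := k.+1) (t := s) (q := p.+1%:R) (@A_rec R k.+1 N) (fun i => Y_rec p i hK).
rewrite e in G; rewrite [s * _ + _]addrC G addrC.
by [].
Qed.
End P.

Section C.
Variable R : realFieldType.
Variables b c : nat.
Hypothesis hb : (0 < b)%N.
Hypothesis hc : (0 < c)%N.

Lemma binomR_ff (x : R) d : binomR x d = ff x d / (d`!)%:R.
Proof. by []. Qed.

Lemma conv1 k d M : (0 < k)%N ->
  \sum_(i < M.+1) Acoef R 1 M i * U1 R b c k (k + d) i =
       k%:R / (((k + d) - k).+1`! * (M.+1 - 1)`!)%:R * (b%:R / c%:R) ^+ ((k + d) - k) *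
       \sum_(1 <= l < M.+2)
          (-1) ^+ (M.+1 - l) * 'C(M.+1 - 1, l - 1)%:R
          / binomR ((k + d)%:R + b%:R / c%:R * l%:R) ((k + d) - k).+1
          * l%:R ^+ ((k + d) + M.+1 - 1 - k).
Proof.
move=> hk.
rewrite big_add1 /= big_mkord mulr_sumr; apply: eq_bigr => i _.
have e1 : ((k + d) + M.+1 - 1 - k = d + M)%N by lia.
rewrite e1 addKn subn1 /= subSS subn1 /= binomR_ff.
rewrite (_ : i.+1 = i + 1)%N; last by rewrite addn1.
rewrite /Acoef /U1 addKn.
have hy := ry_gt0 R hb hc i.
have hF : ff ((k + d)%:R + b%:R / c%:R * (i + 1)%N%:R) d.+1 != 0 :> R.
  by rewrite gt_eqF // (ffpos hb hc) //; lia.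
move: hF hy; set F := ff _ _; set y := b%:R / c%:R * (i + 1)%N%:R => hF hy.
rewrite exprD exprMn.
have h1 := fact_neq0 R d.+1; have h2 := fact_neq0 R M.
move: h1 h2; set D1 := (d.+1)`!%:R; set D2 := M`!%:R => h1 h2.
rewrite natrM -/D1 -/D2.
by field; rewrite !fact_neq0 hF.
Qed.

Lemma conv0 n M :
  \sum_(i < M.+1) Acoef R 1 M i * U0 R b c n i =
    1 / (n`! * (M.+1 - 1)`!)%:R * (b%:R / c%:R) ^+ n *
    \sum_(1 <= l < M.+2)
       (-1) ^+ (M.+1 - l) * 'C(M.+1 - 1, l - 1)%:R
       / binomR (n%:R + b%:R / c%:R * l%:R) n
       * l%:R ^+ (n + M.+1 - 1).
Proof.
rewrite big_add1 /= big_mkord mulr_sumr; apply: eq_bigr => i _.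
have e1 : (n + M.+1 - 1 = n + M)%N by lia.
rewrite e1 subn1 /= subSS subn1 /= binomR_ff.
rewrite (_ : i.+1 = i + 1)%N; last by rewrite addn1.
rewrite /Acoef /U0.
have hy := ry_gt0 R hb hc i.
have hF : ff (n%:R + b%:R / c%:R * (i + 1)%N%:R) n != 0 :> R.
  by rewrite gt_eqF // (ffpos hb hc) //; lia.
move: hF hy; set F := ff _ _; set y := b%:R / c%:R * (i + 1)%N%:R => hF hy.
rewrite exprD exprMn natrM.
by field; rewrite !fact_neq0 hF.
Qed.

Lemma sum_shift (F : nat -> R) k N :
  \sum_(k <= l < (k + N).+1) F l = \sum_(i < N.+1) F (i + k)%N.
Proof.
rewrite -{1}(add0n k) big_addn big_mkord.
by rewrite (_ : ((k + N).+1 - k = N.+1)%N) //; lia.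
Qed.

Lemma conv2 k N M : (0 < k)%N ->
  \sum_(i < N.+1) Acoef R k N i * Y R b c k M.+1 i =
       k%:R / (((k + N) - k)`! * M.+1`!)%:R * (c%:R / b%:R) ^+ M.+1 *
       \sum_(0 <= l < (k + N).+1)
          (-1) ^+ ((k + N) - l) * (if (k <= l)%N then 'C((k + N) - k, l - k) else 0%N)%:R
          / binomR (M.+1%:R + c%:R * l%:R / b%:R) M.+1
          * l%:R ^+ (M.+1 + (k + N) - 1 - k).
Proof.
move=> hk.
rewrite (@big_cat_nat _ _ _ k) //=; last by lia.
rewrite [X in _ * (X + _)]big_nat_cond [X in _ * (X + _)]big1 ?add0r; last first.
  move=> l /andP [/andP [_ hl] _].
  by rewrite leqNgt hl /= mulr0n mulr0 !mul0r.
rewrite sum_shift mulr_sumr; apply: eq_bigr => i _.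
rewrite leq_addl addnK addKn binomR_ff.
have e1 : (M.+1 + (k + N) - 1 - k = N + M)%N by lia.
have e2 : (k + N - (i + k) = N - i)%N by lia.
rewrite e1 e2 /Acoef /Y.
have -> : c%:R * (i + k)%N%:R / b%:R = c%:R / b%:R * (i + k)%N%:R :> R by ring.
have hy := sy_gt0 R hb hc i hk.
have hF : ff (M.+1%:R + c%:R / b%:R * (i + k)%N%:R) M.+1 != 0 :> R.
  by rewrite gt_eqF // (ffpos hb hc) //; lia.
have hik : ((i + k)%N%:R : R) != 0 by rewrite pnatr_eq0; lia.
move: hF hy hik; set F := ff _ _; set y := c%:R / b%:R * (i + k)%N%:R; set z := (i + k)%N%:R => hF hy hik.
rewrite exprD exprMn natrM exprS.
rewrite exprS; field; rewrite !fact_neq0 hF -natrD !pnatr_eq0 /=; apply/andP; split; lia.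
Qed.
End C.

Unset Implicit Arguments.

Theorem corollary2 (R : realFieldType) (b c n m : nat) :
  (0 < b)%N -> (0 < c)%N -> (1 <= n)%N -> (1 <= m)%N ->
  (forall k : nat, (1 <= k <= n)%N ->
     okc_law R b c n m k =
       k%:R / ((n - k).+1`! * (m - 1)`!)%:R * (b%:R / c%:R) ^+ (n - k) *
       \sum_(1 <= l < m.+1)
          (-1) ^+ (m - l) * 'C(m - 1, l - 1)%:R
          / binomR (n%:R + b%:R / c%:R * l%:R) (n - k).+1
          * l%:R ^+ (n + m - 1 - k)
     /\
     okc_law R b c n m k =
       k%:R / ((n - k)`! * m`!)%:R * (c%:R / b%:R) ^+ m *
       \sum_(0 <= l < n.+1)
          (-1) ^+ (n - l) * (if (k <= l)%N then 'C(n - k, l - k) else 0%N)%:R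
          / binomR (m%:R + c%:R * l%:R / b%:R) m
          * l%:R ^+ (m + n - 1 - k))
  /\
  okc_law R b c n m 0 =
    1 / (n`! * (m - 1)`!)%:R * (b%:R / c%:R) ^+ n *
    \sum_(1 <= l < m.+1)
       (-1) ^+ (m - l) * 'C(m - 1, l - 1)%:R
       / binomR (n%:R + b%:R / c%:R * l%:R) n
       * l%:R ^+ (n + m - 1).
Proof.
move=> hb hc hn hm.
case: m hm => [//|M] _.
split; last by rewrite (F0_main R hb hc) conv0.
move=> k /andP [hk hkn].
have [d ->] : exists d, n = (k + d)%N by exists (n - k)%N; rewrite subnKC.
split.
  by rewrite (F1_main R hb hc hk) conv1.
by rewrite (F2_main R hb hc hk d M.+1) conv2.
Qed.
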